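(* For every integer $n\ge 4$, $d(C_n)<h(n)$, where $$h(n)=\begin{cases}2^{n-1}+(n+9)\cdot 2^{\frac{n-7}{2}}, & n\text{ odd},\\ 2^{n-1}+(n+12)\cdot 2^{\frac{n-8}{2}}, & n \text{ even},\ n\neq 6,\\ 42, & n=6.\end{cases}$$
   Context: All graphs are finite, simple and undirected. A subset $D\subseteq V(G)$ is a dissociation set of $G$ if the induced subgraph $G[D]$ has maximum degree at most $1$; the empty set is a dissociation set. $d(G)$ denotes the total number of dissociation sets of $G$, including the empty set. $C_n$ denotes the cycle on $n$ vertices. *)

(* Defs.v *)
From mathcomp Require Import all_boot all_order all_algebra.
Set Implicit Arguments. Unset Strict Implicit. Unset Printing Implicit Defensive.
Import Order.TTheory GRing.Theory Num.Theory.
Local Open Scope ring_scope.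

Definition simple_graph (T : finType) (e : rel T) : Prop :=
  irreflexive e /\ symmetric e.

Definition dissociation (T : finType) (e : rel T) (D : {set T}) : bool :=
  [forall x in D, (#|[set y in D | e x y]| <= 1)%N].

Definition dnum (T : finType) (e : rel T) : nat :=
  #|[set D : {set T} | dissociation e D]|.

Definition cycle_adj (n : nat) : rel 'I_n :=
  fun i j => (j == (i.+1 %% n)%N :> nat) || (i == (j.+1 %% n)%N :> nat).

(* h(n) as a rational; exponents (n-7)/2, (n-8)/2 are integers (possibly
   negative for small n). *)
Definition hval (n : nat) : rat :=
  if odd n then
    2%:Q ^+ n.-1 + (n + 9)%:R * 2%:Q ^ ((n%:Z - 7) %/ 2)%Z
  else if (n == 6)%N then 42%:R
  else 2%:Q ^+ n.-1 + (n + 12)%:R * 2%:Q ^ ((n%:Z - 8) %/ 2)%Z.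

(* Main.v *)
Require Import Defs.
From mathcomp Require Import all_boot all_order all_algebra.
From mathcomp Require Import zify.
Import Order.TTheory GRing.Theory Num.Theory.
Local Open Scope ring_scope.

Fixpoint strs (n : nat) : seq (seq bool) :=
  if n is m.+1 then map (cons false) (strs m) ++ map (cons true) (strs m)
  else [:: [::]].

Fixpoint good (s : seq bool) : bool :=
  match s with
  | a :: t => match t with
              | b :: c :: _ => ~~ [&& a, b & c] && good t
              | _ => true end
  | _ => true end.

Definition cgood (s : seq bool) := good (s ++ take 2 s).

Lemma strsS n : strs n.+1 = map (cons false) (strs n) ++ map (cons true) (strs n).
Proof. by []. Qed.

Lemma mem_strs n s : (s \in strs n) = (size s == n).
Proof.
elim: n s => [|n IH] s; first by case: s.
have inj b : injective (cons b) by move=> x y [].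
rewrite strsS mem_cat; case: s => [|b t] /=.
  by apply/negbTE/negP => /orP [] /mapP [x _ //].
rewrite eqSS -IH; case: b.
  rewrite (mem_map (inj _ true)); case: (t \in strs n); rewrite ?orbT ?orbF //.
  by apply/negbTE/negP => /mapP [x _ //].
rewrite (mem_map (inj _ false)); case: (t \in strs n) => //=.
by apply/negbTE/negP => /mapP [x _ //].
Qed.

Lemma good_cat s t : good (s ++ t) -> good s.
Proof.
elim: s => [//|a s IH].
case: s IH => [//|b [|c s]] IH //.
move=> /andP [h1 h2]; apply/andP; split => //; exact: IH.
Qed.

Lemma good_nth s :
  (forall i, (i.+2 < size s)%N ->
     ~~ [&& nth false s i, nth false s i.+1 & nth false s i.+2]) -> good s.
Proof.
elim: s => [//|a s IH] H.
case: s IH H => [|b [|c s]] IH H //.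
apply/andP; split; first exact: (H 0%N).
by apply: IH => i hi; apply: (H i.+1).
Qed.

Lemma good0 s : good (false :: s) = good s.
Proof. by case: s => [|b [|c t]]. Qed.
Lemma good10 s : good (true :: false :: s) = good s.
Proof. case: s => [|c t] //. transitivity (good (false :: c :: t)) => //; exact: good0. Qed.
Lemma good110 s : good (true :: true :: false :: s) = good s.
Proof. transitivity (good (true :: false :: s)) => //; exact: good10. Qed.
Lemma good111 s : good (true :: true :: true :: s) = false.
Proof. by []. Qed.

Definition c n := count good (strs n).

Lemma cc1 k : count (preim (cons true) good) (strs k.+1) =
  (count good (strs k) + count (preim (cons true) (preim (cons true) good)) (strs k))%N.
Proof.
rewrite strsS count_cat !count_map; congr addn; apply: eq_count => x; exact: good10.
Qed.

Lemma cc2 k : count (preim (cons true) (preim (cons true) good)) (strs k.+1) =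
  count good (strs k).
Proof.
rewrite strsS count_cat !count_map.
rewrite (@eq_count _ (preim (cons true) (preim (cons true) (preim (cons true) good))) pred0); last by move=> x; exact: good111.
rewrite count_pred0 addn0; apply: eq_count => x; exact: good110.
Qed.

Lemma crec n : c n.+3 = (c n.+2 + c n.+1 + c n)%N.
Proof.
rewrite /c strsS count_cat !count_map.
rewrite (@eq_count _ (preim (cons false) good) good); last by move=> x; exact: good0.
by rewrite cc1 cc2 addnA.
Qed.

Lemma cbound k : (c (k + 10) < 2 ^ (k + 9))%N.
Proof.
suff: [/\ (c (k + 10) < 2 ^ (k + 9))%N, (c (k + 11) < 2 ^ (k + 10))%N
        & (c (k + 12) < 2 ^ (k + 11))%N] by case.
elim: k => [|k [h1 h2 h3]]; first by split; vm_compute.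
have -> : (k.+1 + 10 = k + 11)%N by lia.
have -> : (k.+1 + 9 = k + 10)%N by lia.
have -> : (k.+1 + 11 = k + 12)%N by lia.
split => //.
have -> : (k.+1 + 12 = (k + 10).+3)%N by lia.
rewrite crec.
have e1 : (k + 10).+2 = (k + 12)%N by lia.
have e2 : (k + 10).+1 = (k + 11)%N by lia.
rewrite e1 e2.
have E1 : (2 ^ (k + 10) = 2 * 2 ^ (k + 9))%N by rewrite -expnS addnS.
have E2 : (2 ^ (k + 11) = 2 * 2 ^ (k + 10))%N by rewrite -expnS addnS.
have E3 : (2 ^ (k + 12) = 2 * 2 ^ (k + 11))%N by rewrite -expnS addnS.
rewrite E3 E2 E1 in h2 h3 *.
lia.
Qed.

Section Inj.
Variable m : nat.
Hypothesis hm : (2 <= m)%N.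
Notation N := m.+1.

Definition fD (D : {set 'I_N}) : seq bool := [seq ((inord k : 'I_N) \in D) | k <- iota 0 N].

Lemma nth_fD D j : (j < N + 2)%N ->
  nth false (fD D ++ take 2 (fD D)) j = ((inord (j %% N) : 'I_N) \in D).
Proof.
move=> hj.
rewrite nth_cat /fD size_map size_iota.
case: ltnP => hjN.
  by rewrite (nth_map 0%N) ?size_iota // nth_iota // add0n modn_small.
rewrite nth_take; last by lia.
rewrite (nth_map 0%N) ?size_iota; last by lia.
rewrite nth_iota; last by lia.
rewrite add0n.
have -> : (j %% N = j - N)%N.
  by rewrite -{1}(subnK hjN) modnDr modn_small //; lia.
by [].
Qed.

Lemma fD_cgood D : dissociation (@cycle_adj N) D -> cgood (fD D).
Proof.
move=> hD; apply: good_nth => i.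
rewrite size_cat size_take /fD size_map size_iota.
have -> : (2 < N)%N = true by apply/idP; lia.
move=> hi.
rewrite -/(fD D) !nth_fD; try lia.
apply/negP => /and3P [ha hb hc].
move: hD => /forallP /(_ (inord (i.+1 %% N))) /implyP /(_ hb).
apply/negP; rewrite -ltnNge.
have hiN : (i < N)%N by lia.
have sub : [set (inord (i %% N) : 'I_N); inord (i.+2 %% N)] \subset
   [set y in D | cycle_adj (inord (i.+1 %% N)) y].
  apply/subsetP => y; rewrite !inE => /orP [] /eqP ->.
    rewrite ha /cycle_adj /= !inordK ?ltn_pmod // (modn_small hiN).
    by rewrite eqxx orbT.
  rewrite hc /cycle_adj /= !inordK ?ltn_pmod //.
  have -> : ((i.+1 %% N).+1 %% N = i.+2 %% N)%N.
    by rewrite -[((i.+1 %% N).+1)]addn1 modnDml addn1.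
  by rewrite eqxx.
apply: leq_trans (subset_leq_card sub).
rewrite cards2.
have -> : ((inord (i %% N) : 'I_N) != inord (i.+2 %% N)) = true; last by [].
apply/eqP => /(congr1 (@nat_of_ord N)); rewrite !inordK ?ltn_pmod // (modn_small hiN).
case: (ltnP i.+2 N) => h2.
  by rewrite modn_small //; lia.
have -> : (i.+2 %% N = i.+2 - N)%N.
  by rewrite -{1}(subnK h2) modnDr modn_small //; lia.
lia.
Qed.

Lemma dnum_le : (dnum (@cycle_adj N) <= count cgood (strs N))%N.
Proof.
rewrite /dnum -size_filter cardE -(size_map fD).
apply: uniq_leq_size.
  rewrite map_inj_in_uniq ?enum_uniq //.
  move=> D1 D2 _ _ eq; apply/setP => x.
  have := congr1 (fun s => nth false s x) eq.
  by rewrite /fD !(nth_map 0%N) ?size_iota // !nth_iota // add0n inord_val.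
move=> s /mapP [D]; rewrite mem_enum inE => hD ->.
by rewrite mem_filter mem_strs /fD size_map size_iota eqxx andbT fD_cgood.
Qed.

End Inj.

Lemma cgood_le n : (count cgood (strs n) <= c n)%N.
Proof. apply: sub_count => s; exact: good_cat. Qed.

Lemma hval_ge n : (n != 6)%N -> 2%:Q ^+ n.-1 <= hval n.
Proof.
move=> h6; rewrite /hval (negbTE h6).
have H k z : 2%:Q ^+ n.-1 <= 2%:Q ^+ n.-1 + k%:R * 2%:Q ^ z.
  by rewrite lerDl mulr_ge0 // exprz_ge0.
by case: ifP.
Qed.

Theorem lemma4p1 (n : nat) : (4 <= n)%N -> ((dnum (@cycle_adj n))%:R < hval n)%R.
Proof.
case: n => [|m] hn; first by exfalso; move: hn; rewrite ltn0.
have hm : (2 <= m)%N by lia.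
have H := @dnum_le m hm.
case: (ltnP m 9) => hm9.
{ apply: (le_lt_trans (y := (count cgood (strs m.+1))%:R)).
    by rewrite ler_nat.
  case: m hm hm9 hn {H} => [|[|[|[|[|[|[|[|[|m]]]]]]]]] hm hm9 hn; try (exfalso; lia).
  all: vm_compute; reflexivity. }
have hc := cbound (m - 9).
have e1 : (m - 9 + 10 = m.+1)%N by lia.
have e2 : (m - 9 + 9 = m.+1.-1)%N by lia.
rewrite e1 e2 in hc.
apply: (lt_le_trans (y := 2%:Q ^+ m.+1.-1)); last by apply: hval_ge; lia.
rewrite -natrX ltr_nat.
exact: leq_ltn_trans H (leq_ltn_trans (cgood_le _) hc).
Qed.
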